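(* The set $G^*\operatorname{cone}\big(\mathbb{R}^m_- -(G\bar u-b)\big)^\circ$ is a weakly-$*$ closed subset of $L^\infty(\Lambda)^*$.
   Context: Let $\Lambda\subset\mathbb{R}^d$ be bounded and Lebesgue measurable, $f:L^2(\Lambda)\to\mathbb{R}$ continuously Fréchet differentiable, $G:L^2(\Lambda)\to\mathbb{R}^m$ linear and bounded, $b\in\mathbb{R}^m$, $u_a,u_b\in L^\infty(\Lambda)$ with $u_a+\delta\le u_b$ a.e. for some $\delta>0$. Consider the problem: minimize $f(u)$ subject to $u_a\le u\le u_b$ a.e. in $\Lambda$ and $Gu\le b$. Assume there is $\hat u\in L^\infty(\Lambda)$ with $G\hat u\le b$ and $u_a+\rho\le\hat u\le u_b-\rho$ a.e. for some $\rho>0$. Let $\bar u\in L^\infty(\Lambda)$ be a locally optimal solution of this problem. $G$ is also regarded as a map on $L^\infty(\Lambda)\hookrightarrow L^2(\Lambda)$, with adjoint $G^*:\mathbb{R}^m\to L^\infty(\Lambda)^*$. $\mathbb{R}^m_-:=\{v\in\mathbb{R}^m:v\le0\}$, $\operatorname{cone}$ denotes the conic hull, and $K^\circ:=\{w\in\mathbb{R}^m: w^\top v\le 0\ \forall v\in K\}$ the polar cone. *)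

(* Defs.v *)
From HB Require Import structures.
From mathcomp Require Import all_boot all_order all_algebra.
From mathcomp Require Import all_classical all_reals all_analysis.
Set Implicit Arguments. Unset Strict Implicit. Unset Printing Implicit Defensive.
Import Order.TTheory GRing.Theory Num.Theory.
Local Open Scope classical_set_scope.
Local Open Scope ring_scope.

Section Defs.
Context {dT : measure_display} {T : measurableType dT} {R : realType}.
Variables (mu : {measure set T -> \bar R}) (L : set T).

Definition Linf (u : T -> R) : Prop :=
  measurable_fun L u /\ exists C : R, {ae mu, forall x, L x -> `|u x| <= C}.

Definition ess_bounded_by (u : T -> R) (M : R) : Prop :=
  {ae mu, forall x, L x -> `|u x| <= M}.

Definition L2 (u : T -> R) : Prop :=
  measurable_fun L u /\ (\int[mu]_(x in L) ((u x) ^+ 2)%:E < +oo)%E.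

Definition L2norm (u : T -> R) : R :=
  Num.sqrt (fine (\int[mu]_(x in L) ((u x) ^+ 2)%:E)).


(* elements of the dual L^infty(L)^*, represented by their action on
   representatives of L^infty(L): linear, well defined on a.e.-classes,
   bounded w.r.t. the essential sup norm. Only values on Linf matter. *)
Definition Linf_dual (phi : (T -> R) -> R) : Prop :=
  [/\ (forall u v, Linf u -> Linf v -> ae_eq mu L u v -> phi u = phi v),
      (forall (a : R) u v, Linf u -> Linf v -> phi (fun x => a * u x + v x) = a * phi u + phi v)
    & exists C : R, forall u M, Linf u -> ess_bounded_by u M -> `|phi u| <= C * M].

(* weak-* closedness of a set S of elements of L^infty(L)^* (S is assumed to
   be a union of classes of functionals agreeing on L^infty): every point of
   the dual outside S has a basic weak-* neighbourhood disjoint from S *)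
Definition weak_star_closed (S : set ((T -> R) -> R)) : Prop :=
  forall phi, Linf_dual phi -> ~ S phi ->
    exists (vs : seq (T -> R)) (e : R), 0 < e /\ (forall v, v \in vs -> Linf v) /\
      forall psi, Linf_dual psi ->
        (forall v, v \in vs -> `|psi v - phi v| < e) -> ~ S psi.

Definition C1_L2 (f : (T -> R) -> R) : Prop :=
  exists Df : (T -> R) -> (T -> R) -> R,
  [/\ (forall u, L2 u ->
        (forall (a : R) h k, L2 h -> L2 k -> Df u (fun x => a * h x + k x) = a * Df u h + Df u k)
        /\ exists C : R, forall h, L2 h -> `|Df u h| <= C * L2norm h),
      (forall u, L2 u -> forall e : R, 0 < e -> exists2 d : R, 0 < d &
         forall h, L2 h -> L2norm h < d ->
           `|f (fun x => u x + h x) - f u - Df u h| <= e * L2norm h)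
    & (forall u, L2 u -> forall e : R, 0 < e -> exists2 d : R, 0 < d &
         forall v, L2 v -> L2norm (fun x => v x - u x) < d ->
           forall h, L2 h -> `|Df v h - Df u h| <= e * L2norm h)].
End Defs.

(* finite-dimensional part: R^m is 'I_m -> R, ordered componentwise *)
Definition vdot {R : realType} {m : nat} (w v : 'I_m -> R) : R := \sum_(i < m) w i * v i.

Definition cone {R : realType} {m : nat} (A : set ('I_m -> R)) : set ('I_m -> R) :=
  [set v | exists (n : nat) (t : 'I_n -> R) (a : 'I_n -> 'I_m -> R),
     [/\ forall k, 0 <= t k, forall k, A (a k) & v = fun i => \sum_(k < n) t k * a k i]].

Definition polar {R : realType} {m : nat} (K : set ('I_m -> R)) : set ('I_m -> R) :=
  [set w | forall v, K v -> vdot w v <= 0].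

Definition nonpos_minus {R : realType} {m : nat} (c : 'I_m -> R) : set ('I_m -> R) :=
  [set z | exists2 v : 'I_m -> R, (forall i, v i <= 0) & z = fun i => v i - c i].

Definition Gstar {T : Type} {R : realType} {m : nat} (G : (T -> R) -> 'I_m -> R)
  (w : 'I_m -> R) : (T -> R) -> R := fun v => vdot w (G v).

(* the image G^* K as a set of elements of L^infty(L)^*: functionals that
   coincide on L^infty(L) with G^* w for some w in K *)
Definition Gstar_image {dT : measure_display} {T : measurableType dT} {R : realType}
  (mu : {measure set T -> \bar R}) (L : set T) {m : nat}
  (G : (T -> R) -> 'I_m -> R) (K : set ('I_m -> R)) : set ((T -> R) -> R) :=
  [set phi | exists2 w, K w & forall v, Linf mu L v -> phi v = Gstar G w v].

(* Main.v *)
Require Import Defs.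
From HB Require Import structures.
From mathcomp Require Import all_boot all_order all_algebra.
From mathcomp Require Import all_classical all_reals all_analysis.
From mathcomp Require Import lra zify.
Set Implicit Arguments. Unset Strict Implicit. Unset Printing Implicit Defensive.
Import Order.TTheory GRing.Theory Num.Theory.
Local Open Scope classical_set_scope.
Local Open Scope ring_scope.
Section Cone.
Variable R : realFieldType.

Definition comb n k (t : 'I_n -> R) (a : 'I_n -> 'I_k -> R) : 'I_k -> R :=
  fun j => \sum_(i < n) t i * a i j.
Definition rv n (t : 'I_n -> R) : 'rV[R]_n := \row_i t i.
Definition amx n k (a : 'I_n -> 'I_k -> R) : 'M[R]_(n, k) := \matrix_(i, j) a i j.

Lemma combE n k t (a : 'I_n -> 'I_k -> R) j : comb t a j = (rv t *m amx a) 0 j.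
Proof. by rewrite !mxE; apply: eq_bigr => i _; rewrite !mxE. Qed.

Definition Kc k p (c : 'M[R]_(k, p)) := 1 + \sum_j \sum_l `|c j l|.

Lemma Kc_gt0 k p (c : 'M[R]_(k, p)) : 0 < Kc c.
Proof.
rewrite /Kc ltr_pwDl //; apply: sumr_ge0 => j _; apply: sumr_ge0 => l _; exact: normr_ge0.
Qed.

Lemma sum_bound k p (d : 'I_k -> R) (c : 'M[R]_(k, p)) i :
  `|\sum_j d j * c j i| <= Kc c * \sum_j `|d j|.
Proof.
apply: le_trans (ler_norm_sum _ _ _) _.
rewrite mulr_sumr; apply: ler_sum => j _.
rewrite normrM mulrC; apply: ler_wpM2r; first exact: normr_ge0.
have h1 : `|c j i| <= \sum_l `|c j l|.
  rewrite (bigD1 i) //= lerDl; apply: sumr_ge0 => l _; exact: normr_ge0.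
have h2 : \sum_l `|c j l| <= \sum_j' \sum_l `|c j' l|.
  rewrite (bigD1 j) //= lerDl; apply: sumr_ge0 => j' _; apply: sumr_ge0 => l _; exact: normr_ge0.
rewrite /Kc; apply: le_trans h1 _; apply: le_trans h2 _; rewrite lerDr //.
Qed.

Lemma notrow n k (a : 'I_n -> 'I_k -> R) (y0 : 'I_k -> R) :
  ~~ (rv y0 <= amx a)%MS ->
  exists2 e, 0 < e & forall t, e <= \sum_j `|comb t a j - y0 j|.
Proof.
rewrite submxE => hn.
set c := cokermx (amx a) in hn *.
have [i hi] : exists i, (rv y0 *m c) 0 i != 0.
  apply/existsP; move: hn; apply: contraR; rewrite negb_exists => /forallP h.
  apply/eqP/matrixP => x y; rewrite (ord1 x) [RHS]mxE; by move: (h y); rewrite negbK => /eqP.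
exists (`|(rv y0 *m c) 0 i| / Kc c).
  by rewrite divr_gt0 ?normr_gt0 ?Kc_gt0.
move=> t; rewrite ler_pdivrMr ?Kc_gt0 // mulrC.
have E : ((rv t *m amx a - rv y0) *m c) 0 i = - (rv y0 *m c) 0 i.
  by rewrite mulmxBl -mulmxA mulmx_coker mulmx0 sub0r mxE.
rewrite -normrN -E.
have -> : ((rv t *m amx a - rv y0) *m c) 0 i =
          \sum_j (comb t a j - y0 j) * c j i.
  rewrite mxE; apply: eq_bigr => j _; rewrite !mxE combE !mxE; done.
exact: sum_bound.
Qed.

Lemma indep n k (a : 'I_n -> 'I_k -> R) (y0 : 'I_k -> R) :
  row_free (amx a) ->
  (forall t, (forall i, 0 <= t i) -> comb t a <> y0) ->
  exists2 e, 0 < e & forall t, (forall i, 0 <= t i) ->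
    e <= \sum_j `|comb t a j - y0 j|.
Proof.
move=> /row_freeP [B hB] H.
case: (boolP (rv y0 <= amx a)%MS) => [/submxP [D hD]|hn]; last first.
  by have [e e0 he] := notrow hn; exists e => // t _; exact: he.
case: (boolP [forall i, 0 <= D 0 i]) => [/forallP allnn|].
  exfalso; apply: (H (fun i => D 0 i)) => //.
  apply/funext => j; rewrite combE.
  have -> : rv (fun i => D 0 i) = D by apply/matrixP => x y; rewrite (ord1 x) mxE.
  by rewrite -hD mxE.
rewrite negb_forall => /existsP [i]; rewrite -ltNge => hi.
exists (- D 0 i / Kc B); first by rewrite divr_gt0 ?Kc_gt0 // oppr_gt0.
move=> t t0; rewrite ler_pdivrMr ?Kc_gt0 // mulrC.
have E : ((rv t *m amx a - rv y0) *m B) 0 i = t i - D 0 i.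
  by rewrite mulmxBl -!mulmxA hB !mulmx1 hD -mulmxA hB mulmx1 !mxE.
have E2 : ((rv t *m amx a - rv y0) *m B) 0 i =
          \sum_j (comb t a j - y0 j) * B j i.
  rewrite mxE; apply: eq_bigr => j _; rewrite !mxE combE !mxE; done.
apply: le_trans (sum_bound _ B i); rewrite -E2 E.
apply: le_trans (ler_norm _); have := t0 i; lra.
Qed.


Lemma fin_ex n (P : 'I_n -> R -> Prop) :
  (forall i e e', 0 < e' <= e -> P i e -> P i e') ->
  (forall i, exists2 e, 0 < e & P i e) -> exists2 e, 0 < e & forall i, P i e.
Proof.
elim: n P => [|n IH] P Pmon H; first by exists 1 => // -[].
have [e1 e10 he1] := IH (fun i => P (lift ord0 i)) (fun i => Pmon _) (fun i => H _).
have [e2 e20 he2] := H ord0.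
exists (Num.min e1 e2); first by rewrite lt_min e10 e20.
move=> i; case: (unliftP ord0 i) => [j ->|->].
  by apply: Pmon (he1 j); rewrite lt_min e10 e20 ge_min lexx.
by apply: Pmon he2; rewrite lt_min e10 e20 ge_min lexx orbT.
Qed.

Lemma cone_sep k n (a : 'I_n -> 'I_k -> R) (y0 : 'I_k -> R) :
  (forall t, (forall i, 0 <= t i) -> comb t a <> y0) ->
  exists2 e, 0 < e & forall t, (forall i, 0 <= t i) ->
    e <= \sum_j `|comb t a j - y0 j|.
Proof.
elim: n a => [|n IH] a H.
  apply: indep => //; rewrite /row_free; move: (rank_leq_row (amx a)).
  by rewrite leqn0.
case: (boolP (row_free (amx a))) => [rf|nrf]; first exact: indep.
have [l [hl [ip hip]]] : exists l : 'I_n.+1 -> R,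
    (forall j, comb l a j = 0) /\ exists i, 0 < l i.
  move: nrf; rewrite -kermx_eq0 => /eqP hk.
  have [r hr] : exists r, row r (kermx (amx a)) != 0.
    apply/existsP; apply: contraT; rewrite negb_exists => /forallP h.
    exfalso; apply: hk; apply/row_matrixP => r; rewrite row0.
    by move: (h r); rewrite negbK => /eqP.
  set lam := row r (kermx (amx a)) in hr.
  have hz : forall c : R, forall j, comb (fun i => c * lam 0 i) a j = 0.
    move=> c j; rewrite combE.
    have -> : rv (fun i => c * lam 0 i) = c *: lam.
      by apply/matrixP => x y; rewrite (ord1 x) !mxE.
    by rewrite -scalemxAl /lam -row_mul mulmx_ker row0 scaler0 mxE.
  have [i hi] : exists i, lam 0 i != 0.
    apply/existsP; apply: contraT; rewrite negb_exists => /forallP h.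
    move: hr; apply: contraLR; rewrite negbK => _; apply/eqP/matrixP => x y; rewrite (ord1 x) [RHS]mxE.
    by move: (h y); rewrite negbK => /eqP.
  case: (ltrgtP (lam 0 i) 0) => [hneg|hpos|/eqP]; last by rewrite (negbTE hi).
    exists (fun i => -1 * lam 0 i); split; first exact: hz.
    by exists i; rewrite mulN1r oppr_gt0.
  exists (fun i => 1 * lam 0 i); split; first exact: hz.
  by exists i; rewrite mul1r.
have [e e0 he] : exists2 e, 0 < e & forall i0 t, (forall i, 0 <= t i) ->
    e <= \sum_j `|comb t (fun j => a (lift i0 j)) j - y0 j|.
  apply: (fin_ex (P := fun i0 e => forall t, (forall i, 0 <= t i) ->
    e <= \sum_j `|comb t (fun j => a (lift i0 j)) j - y0 j|)).
    by move=> i0 e1 e2 /andP [_ h12] h t ht; exact: le_trans h12 (h t ht).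
  move=> i0; apply: IH => t ht hc.
  apply: (H (fun i => if unlift i0 i is Some j then t j else 0)).
    by move=> i; case: (unlift i0 i).
  rewrite -hc; apply/funext => j; rewrite /comb (bigD1_ord i0) //= unlift_none.
  by rewrite mul0r add0r; apply: eq_bigr => i _; rewrite liftK.
exists e => // t ht.
have [i1 hi1 hmin] : exists2 i1, 0 < l i1 & forall i, 0 < l i -> t i1 / l i1 <= t i / l i.
  case: (@arg_minP _ R _ ip (fun i => 0 < l i) (fun i => t i / l i) hip) => i1 h1 h2.
  by exists i1.
pose s := t i1 / l i1.
pose t' := fun i => t i - s * l i.
have t'0 : forall i, 0 <= t' i.
  move=> i; rewrite /t' subr_ge0; case: (ltrP 0 (l i)) => hli.
    by rewrite -ler_pdivlMr //; exact: hmin.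
  apply: le_trans (ht i); rewrite /s mulr_ge0_le0 // divr_ge0 // ?ht //.
  exact: ltW.
have t'i1 : t' i1 = 0 by rewrite /t' /s divfK ?subrr // gt_eqF.
have ct : comb t' a = comb t a.
  apply/funext => j; move: (hl j); rewrite /comb => hlj.
  under eq_bigr => i _ do rewrite /t' mulrBl.
  rewrite sumrB.
  have -> : \sum_(i < n.+1) s * l i * a i j = s * \sum_(i < n.+1) l i * a i j.
    by rewrite mulr_sumr; apply: eq_bigr => i _; rewrite mulrA.
  by rewrite hlj mulr0 subr0.
apply: le_trans (he i1 (fun j => t' (lift i1 j)) (fun j => t'0 _)) _.
rewrite le_eqVlt; apply/orP; left; apply/eqP; apply: eq_bigr => j _.
rewrite -ct /comb (bigD1_ord i1) //= t'i1 mul0r add0r //.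
Qed.

End Cone.

Section Span.
Variables (R : realFieldType) (V : Type) (P : V -> Prop) (m : nat) (g : V -> 'I_m -> R).

Definition gmat k (vs : 'I_k -> V) : 'M[R]_(k, m) := \matrix_(j, i) g (vs j) i.
Definition grow (v : V) : 'rV[R]_m := \row_i g v i.

Definition spans k (vs : 'I_k -> V) :=
  forall v, P v -> exists beta : 'I_k -> R, forall i, g v i = \sum_j beta j * g (vs j) i.

Lemma spans_of k (vs : 'I_k -> V) :
  (forall v, P v -> (grow v <= gmat vs)%MS) -> spans vs.
Proof.
move=> h v /h /submxP [D hD]; exists (fun j => D 0 j) => i.
have := congr1 (fun M : 'M[R]_(1, m) => M 0 i) hD; rewrite /= !mxE => ->.
by apply: eq_bigr => j _; rewrite !mxE.
Qed.

Lemma rank_incr k (vs : 'I_k -> V) v : ~~ (grow v <= gmat vs)%MS ->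
  (\rank (gmat vs) < \rank (gmat (fun j : 'I_(k + 1) =>
      match fintype.split j with inl j' => vs j' | inr _ => v end)))%N.
Proof.
move=> hv.
have -> : gmat (fun j : 'I_(k + 1) => match fintype.split j with inl j' => vs j' | inr _ => v end)
   = col_mx (gmat vs) (grow v).
  apply/matrixP => j i; rewrite !mxE; case: (fintype.split j) => j'; by rewrite !mxE.
rewrite -addsmxE (ltn_leqif (mxrank_leqif_sup (addsmxSl _ _))).
by rewrite addsmx_sub submx_refl.
Qed.

Lemma span_ex : exists k (vs : 'I_k -> V), (forall j, P (vs j)) /\ spans vs.
Proof.
have vs0 : 'I_0 -> V by case.
suff H : forall N k (vs : 'I_k -> V), (forall j, P (vs j)) ->
    (m - \rank (gmat vs) <= N)%N -> exists k (vs : 'I_k -> V), (forall j, P (vs j)) /\ spans vs.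
  by apply: (H m 0%N vs0) => //; [case | rewrite leq_subr].
elim=> [|N IH] k vs hP hN;
  (case: (pselect (forall v, P v -> (grow v <= gmat vs)%MS)) => [hall|hnot];
   first by exists k, vs; split => //; exact: spans_of);
  have [v [hv hnv]] : exists v, P v /\ ~~ (grow v <= gmat vs)%MS by
    (apply: contra_notP hnot => hn v hv; apply: contra_notT (hn) => hn';
     by exists v; split).
- exfalso; have := rank_incr hnv; have := rank_leq_col (gmat (fun j : 'I_(k + 1) =>
      match fintype.split j with inl j' => vs j' | inr _ => v end)).
  move: hN; lia.
- apply: (IH _ (fun j : 'I_(k + 1) => match fintype.split j with inl j' => vs j' | inr _ => v end)).
    by move=> j; case: (fintype.split j).
  have := rank_incr hnv; move: hN; lia.
Qed.
End Span.

Section Meas.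
Context {dT : measure_display} {T : measurableType dT} {R : realType}.
Variables (mu : {measure set T -> \bar R}) (L : set T) (mL : measurable L).

Lemma int_sq_le u M : measurable_fun L u -> ess_bounded_by mu L u M ->
  (\int[mu]_(x in L) ((u x) ^+ 2)%:E <= (M ^+ 2)%:E * mu L)%E.
Proof.
move=> mu_ hb; rewrite -integral_cst //.
apply: ae_ge0_le_integral => //.
- by move=> x _; rewrite lee_fin sqr_ge0.
- by apply/measurable_realfun.measurable_EFinP; exact: measurable_realfun.measurable_funX.
- by move=> x _; rewrite lee_fin sqr_ge0.
- move: hb; apply: filterS => x h Lx; rewrite lee_fin.
  have := h Lx; rewrite ler_norml => /andP [h1 h2]; nra.
Qed.

Lemma neg_bound u M : M < 0 -> ess_bounded_by mu L u M -> mu L = 0%E.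
Proof.
move=> M0 hb; apply/eqP; rewrite eq_le measure_ge0 andbT.
have H := @ae_ge0_le_integral _ _ _ mu L mL (cst 1%E) (cst 0%E).
rewrite !integral_cst // mul1e mul0e in H; apply: H.
- by move=> x _; rewrite lee_fin.
- exact: measurable_cst.
- by move=> x _; rewrite lee_fin.
- exact: measurable_cst.
- move: hb; apply: filterS => x h Lx; have := h Lx; have := normr_ge0 (u x).
  move=> h1 h2; exfalso; lra.
Qed.

Variable (finL : (mu L < +oo)%E).

Lemma muLE : mu L = (fine (mu L))%:E.
Proof. by rewrite fineK // ge0_fin_numE ?measure_ge0. Qed.

Lemma Linf_L2 u : Linf mu L u -> L2 mu L u.
Proof.
move=> [mu_ [C hC]]; split => //.
apply: le_lt_trans (int_sq_le mu_ hC) _.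
by rewrite muLE -EFinM ltry.
Qed.

Lemma L2norm_le u M : measurable_fun L u -> ess_bounded_by mu L u M ->
  L2norm mu L u <= `|M| * Num.sqrt (fine (mu L)).
Proof.
move=> mu_ hb; have h := int_sq_le mu_ hb.
have h0 : (0 <= \int[mu]_(x in L) ((u x) ^+ 2)%:E)%E.
  by apply: integral_ge0 => x _; rewrite lee_fin sqr_ge0.
move: h h0; rewrite muLE -EFinM.
set I := (\int[mu]_(x in L) _)%E => h h0.
have If : I = (fine I)%:E.
  rewrite fineK // ge0_fin_numE //; exact: le_lt_trans h (ltry _).
rewrite /L2norm -/I -sqrtr_sqr -sqrtrM ?sqr_ge0 // ler_sqrt; last first.
  by rewrite mulr_ge0 ?sqr_ge0 // fine_ge0 ?measure_ge0.
by move: h; rewrite If lee_fin.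
Qed.

Lemma Linf_comb a u v : Linf mu L u -> Linf mu L v -> Linf mu L (fun x => a * u x + v x).
Proof.
move=> [mu_ [C1 h1]] [mv [C2 h2]]; split.
  apply: measurable_realfun.measurable_funD => //.
  apply: measurable_realfun.measurable_funM => //; exact: measurable_cst.
exists (`|a| * C1 + C2); move: h1 h2; apply: filterS2 => x h1 h2 Lx.
apply: le_trans (ler_normD _ _) _; rewrite normrM; apply: lerD => //.
by apply: ler_wpM2l => //; exact: h1.
exact: h2.
Qed.

Lemma Linf0 : Linf mu L (fun _ => 0).
Proof.
split; first exact: measurable_cst.
by exists 0; apply: aeW => x _; rewrite normr0.
Qed.

End Meas.


Section LinSum.
Variables (T : Type) (R : realType) (P : (T -> R) -> Prop) (F : (T -> R) -> R).
Hypotheses (hP0 : P (fun _ => 0))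
  (hPc : forall a u v, P u -> P v -> P (fun x => a * u x + v x))
  (hF : forall a u v, P u -> P v -> F (fun x => a * u x + v x) = a * F u + F v).

Lemma F0 : F (fun _ => 0) = 0.
Proof.
have := hF (-1) hP0 hP0.
have -> : (fun x : T => -1 * (0 : R) + 0) = (fun _ => 0).
  by apply/funext => x; rewrite mulr0 addr0.
by rewrite mulN1r addNr.
Qed.

Lemma P_sum k (vs : 'I_k -> T -> R) (beta : 'I_k -> R) (s : seq 'I_k) :
  (forall j, P (vs j)) ->
  P (fun x => \sum_(j <- s) beta j * vs j x) /\
  F (fun x => \sum_(j <- s) beta j * vs j x) = \sum_(j <- s) beta j * F (vs j).
Proof.
move=> hv; elim: s => [|j s [IH1 IH2]].
  have -> : (fun x => \sum_(j <- [::]) beta j * vs j x) = (fun _ => 0).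
    by apply/funext => x; rewrite big_nil.
  by rewrite big_nil F0.
have -> : (fun x => \sum_(j0 <- j :: s) beta j0 * vs j0 x) =
   (fun x => beta j * vs j x + (fun x => \sum_(j0 <- s) beta j0 * vs j0 x) x).
  by apply/funext => x; rewrite big_cons.
by rewrite big_cons hF // IH2; split => //; apply: hPc.
Qed.
End LinSum.

Theorem lemmaA1 (dT : measure_display) (T : measurableType dT) (R : realType)
  (mu : {measure set T -> \bar R}) (L : set T)
  (mL : measurable L) (finL : (mu L < +oo)%E)
  (m : nat) (f : (T -> R) -> R) (G : (T -> R) -> 'I_m -> R) (b : 'I_m -> R)
  (ua ub uhat ubar : T -> R) (delta rho : R)
  (f_ae : forall u v, L2 mu L u -> L2 mu L v -> ae_eq mu L u v -> f u = f v)
  (f_C1 : C1_L2 mu L f)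
  (G_lin : forall (a : R) u v, L2 mu L u -> L2 mu L v ->
     G (fun x => a * u x + v x) = fun i => a * G u i + G v i)
  (G_bnd : exists C : R, forall u, L2 mu L u -> forall i, `|G u i| <= C * L2norm mu L u)
  (ua_inf : Linf mu L ua) (ub_inf : Linf mu L ub)
  (delta_pos : 0 < delta)
  (ua_ub : {ae mu, forall x, L x -> ua x + delta <= ub x})
  (uhat_inf : Linf mu L uhat) (Guhat : forall i, G uhat i <= b i)
  (rho_pos : 0 < rho)
  (uhat_box : {ae mu, forall x, L x -> ua x + rho <= uhat x /\ uhat x <= ub x - rho})
  (ubar_inf : Linf mu L ubar)
  (ubar_box : {ae mu, forall x, L x -> ua x <= ubar x /\ ubar x <= ub x})
  (Gubar : forall i, G ubar i <= b i)
  (ubar_loc : exists2 eps : R, 0 < eps & forall u, L2 mu L u ->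
     {ae mu, forall x, L x -> ua x <= u x /\ u x <= ub x} ->
     (forall i, G u i <= b i) ->
     (exists2 r : R, r < eps & ess_bounded_by mu L (fun x => u x - ubar x) r) ->
     f ubar <= f u) :
  let S := Gstar_image mu L G
             (polar (cone (nonpos_minus (fun i => G ubar i - b i)))) in
  (forall phi, S phi -> Linf_dual mu L phi) /\ weak_star_closed mu L S.
Proof.
move=> S.
have [C hC] := G_bnd.
pose l := fine (mu L).
have LinfL2 : forall u, Linf mu L u -> L2 mu L u by move=> u; exact: Linf_L2.
have Gc : forall i a u v, Linf mu L u -> Linf mu L v ->
    G (fun x => a * u x + v x) i = a * G u i + G v i.
  by move=> i a u v hu hv; rewrite (G_lin a u v (LinfL2 u hu) (LinfL2 v hv)).
have Gbound : forall u M, Linf mu L u -> ess_bounded_by mu L u M ->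
    forall i, `|G u i| <= `|C| * (`|M| * Num.sqrt l).
  move=> u M hu hb i; apply: le_trans (hC u (LinfL2 u hu) i) _.
  apply: (@le_trans _ _ (`|C| * L2norm mu L u)).
    by apply: ler_wpM2r; [exact: sqrtr_ge0 | exact: ler_norm].
  apply: ler_wpM2l => //; exact: L2norm_le hu.1 hb.
have G_ae : forall u v, Linf mu L u -> Linf mu L v -> ae_eq mu L u v -> G u = G v.
  move=> u v hu hv he; apply/funext => i.
  have hw := Linf_comb (-1) hv hu.
  have hb : ess_bounded_by mu L (fun x => -1 * v x + u x) 0.
    by move: he; apply: filterS => x h Lx; rewrite (h Lx) mulN1r addNr normr0.
  have := Gbound _ _ hw hb i; rewrite normr0 mul0r mulr0 Gc // normr_le0 => /eqP.
  lra.
have part1 : forall phi, S phi -> Linf_dual mu L phi.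
  move=> phi [w _ hw]; split.
  - move=> u v hu hv he; rewrite !hw // /Gstar; congr vdot; exact: G_ae.
  - move=> a u v hu hv; rewrite hw; last exact: Linf_comb.
    rewrite !hw // /Gstar /vdot.
    rewrite mulr_sumr -big_split; apply: eq_bigr => i _; rewrite Gc //.
    by rewrite mulrDr mulrCA.
  - exists ((\sum_i `|w i|) * `|C| * Num.sqrt l); move=> u M hu hb.
    have H1 : `|phi u| <= (\sum_i `|w i|) * `|C| * Num.sqrt l * `|M|.
      rewrite hw // /Gstar /vdot; apply: le_trans (ler_norm_sum _ _ _) _.
      rewrite -!mulrA mulr_suml; apply: ler_sum => i _; rewrite normrM.
      apply: ler_wpM2l => //; rewrite [Num.sqrt l * _]mulrC; exact: Gbound.
    case: (ltrP M 0) => hM.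
      have l0 : l = 0 by rewrite /l (neg_bound mL hM hb).
      by move: H1; rewrite l0 sqrtr0 !mulr0 !mul0r.
    by rewrite (ger0_norm hM) in H1.
split => // phi hphi notS.
have [k [vs [vsL hspan]]] := span_ex (Linf mu L) G.
pose c := fun i => G ubar i - b i.
have c_le : forall i, c i <= 0 by move=> i; rewrite /c subr_le0.
pose a := fun i j => if c i == 0 then G (vs j) i else 0.
pose y0 := fun j => phi (vs j).
have polar1 : forall w, polar (cone (nonpos_minus c)) w ->
    (forall i, 0 <= w i) /\ (forall i, c i != 0 -> w i = 0).
  move=> w hw.
  have key : forall v, (forall i, v i <= 0) -> vdot w (fun i => v i - c i) <= 0.
    move=> v hv; apply: hw; exists 1%N, (fun _ => 1), (fun _ => fun i => v i - c i).
    split => //; first by move=> _; exists v.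
    by apply/funext => i; rewrite big_ord1 mul1r.
  have sum_wc : 0 <= \sum_i w i * c i.
    have := key (fun _ => 0) (fun _ => lexx 0); rewrite /vdot.
    under eq_bigr => i _ do rewrite sub0r mulrN.
    by rewrite sumrN oppr_le0.
  have w0 : forall i, 0 <= w i.
    move=> i; rewrite leNgt; apply/negP => hi.
    pose s := (`|\sum_i w i * c i| + 1) / (- w i).
    have s0 : 0 <= s by rewrite /s divr_ge0 // ?oppr_ge0 ?ltW //; lra.
    have := key (fun i' => if i' == i then - s else 0).
    have hv : forall i', (if i' == i then - s else 0) <= 0.
      by move=> i'; case: eqP => _; rewrite ?oppr_le0.
    move=> /(_ hv); rewrite /vdot.
    under eq_bigr => i' _ do rewrite mulrBr.
    rewrite sumrB (bigD1 i) //= eqxx big1 => [|i' /negbTE ->]; last by rewrite mulr0.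
    have ws : w i * - s = `|\sum_i w i * c i| + 1.
      by rewrite mulrN -mulNr mulrC /s divfK // oppr_eq0 lt_eqF.
    rewrite ws addr0; have := ler_norm (\sum_i w i * c i); lra.
  split => // i hci.
  have hpos : forall i', predT i' -> 0 <= - (w i' * c i').
    by move=> i' _; rewrite oppr_ge0 mulr_ge0_le0.
  have hsum : \sum_(i' | predT i') - (w i' * c i') = 0.
    apply/eqP; rewrite eq_le sumr_ge0 ?andbT //.
    by rewrite sumrN oppr_le0.
  have each := psumr_eq0P hpos hsum.
  by move/eqP: (each i isT); rewrite oppr_eq0 mulf_eq0 (negbTE hci) orbF => /eqP.
have polar2 : forall w, (forall i, 0 <= w i) -> (forall i, c i != 0 -> w i = 0) ->
    polar (cone (nonpos_minus c)) w.
  move=> w w0 wm v [n [t [a' [t0 ha hv]]]]; rewrite hv /vdot.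
  apply: sumr_le0 => i _; rewrite mulr_sumr; apply: sumr_le0 => k' _.
  rewrite mulrCA; apply: mulr_ge0_le0 => //.
  have [v' hv' ->] := ha k'.
  case: (eqVneq (c i) 0) => [->|hci]; first by rewrite subr0 mulr_ge0_le0.
  by rewrite (wm i hci) mul0r.

have combw : forall w, (forall i, c i != 0 -> w i = 0) ->
    forall j, comb w a j = Gstar G w (vs j).
  move=> w hw j; rewrite /comb /Gstar /vdot; apply: eq_bigr => i _; rewrite /a.
  by case: eqP => // /eqP hc; rewrite (hw i hc) !mul0r.
have linphi : forall a u v, Linf mu L u -> Linf mu L v ->
    phi (fun x => a * u x + v x) = a * phi u + phi v.
  by case: hphi.
case: (pselect (exists t, (forall i, 0 <= t i) /\ comb t a = y0)) => [[t [t0 ht]]|hno].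
  pose w := fun i => if c i == 0 then t i else 0.
  have hwm : forall i, c i != 0 -> w i = 0 by move=> i /negbTE; rewrite /w => ->.
  have wP : polar (cone (nonpos_minus c)) w.
    by apply: polar2 => // i; rewrite /w; case: eqP.
  have ctw : comb t a = comb w a.
    apply/funext => j; apply: eq_bigr => i _; rewrite /a /w.
    by case: eqP => _; rewrite ?mulr0.
  have hphij : forall j, phi (vs j) = Gstar G w (vs j).
    by move=> j; rewrite -combw // -ctw ht.
  have [v0 [hv0 hne]] : exists v0, Linf mu L v0 /\ phi v0 <> Gstar G w v0.
    apply: contra_notP notS => hn; exists w => // v hv.
    by apply: contra_notP hn => hne; exists v.
  have [beta hbeta] := hspan v0 hv0.
  pose sv := fun x => \sum_(j <- index_enum 'I_k) beta j * vs j x.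
  have [svL phisv] := P_sum (Linf0 mu L) (@Linf_comb _ _ _ mu L) linphi beta
                         (index_enum 'I_k) vsL.
  have Gsv : forall i, G sv i = \sum_(j <- index_enum 'I_k) beta j * G (vs j) i.
    move=> i; have [_ ->] := P_sum (F := fun u => G u i) (Linf0 mu L)
       (@Linf_comb _ _ _ mu L) (fun a u v hu hv => Gc i a u v hu hv) beta
       (index_enum 'I_k) vsL.
    by [].
  pose v1 := fun x => -1 * sv x + v0 x.
  have v1L : Linf mu L v1 by apply: Linf_comb.
  have Gv1 : forall i, G v1 i = 0.
    by move=> i; rewrite /v1 Gc // Gsv -hbeta mulN1r addNr.
  have E : Gstar G w v0 = \sum_j beta j * Gstar G w (vs j).
    rewrite /Gstar /vdot.
    under eq_bigr => i _ do rewrite hbeta mulr_sumr.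
    rewrite exchange_big; apply: eq_bigr => j _; rewrite mulr_sumr.
    by apply: eq_bigr => i _; rewrite mulrCA.
  have phiv1 : phi v1 <> 0.
    rewrite /v1 linphi // phisv.
    under eq_bigr => j _ do rewrite hphij.
    by rewrite -E => h; apply: hne; lra.
  exists [:: v1], `|phi v1|; split; first by rewrite normr_gt0; apply/eqP.
  split; first by move=> v; rewrite inE => /eqP ->.
  move=> psi hpsi hnear [w' _ hw'].
  have := hnear v1 (mem_head _ _); rewrite hw' // /Gstar /vdot big1; last first.
    by move=> i _; rewrite Gv1 mulr0.
  by rewrite sub0r normrN ltxx.
have hno' : forall t, (forall i, 0 <= t i) -> comb t a <> y0.
  by move=> t t0 h; apply: hno; exists t.
have [e e0 he] := cone_sep hno'.
exists (map vs (enum 'I_k)), (e / (k%:R + 1)); split.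
  by rewrite divr_gt0 // ltr_wpDl.
split; first by move=> v /mapP [j _ ->].
move=> psi hpsi hnear [w wP hw].
have [w0 wm] := polar1 w wP.
have := he w w0.
have -> : \sum_j `|comb w a j - y0 j| = \sum_j `|psi (vs j) - phi (vs j)|.
  by apply: eq_bigr => j _; rewrite combw // -hw.
have hs : \sum_(j < k) `|psi (vs j) - phi (vs j)| <= \sum_(j < k) (e / (k%:R + 1)).
  apply: ler_sum => j _; apply: ltW; apply: hnear.
  by apply: map_f; rewrite mem_enum.
rewrite sumr_const card_ord in hs.
have eq : e / (k%:R + 1) *+ k + e / (k%:R + 1) = e.
  have hq : e / (k%:R + 1) * (k%:R + 1) = e by rewrite divfK // lt0r_neq0 // ltr_wpDl.
  by rewrite mulrDr mulr1 in hq; rewrite -mulr_natr.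
have q0 : 0 < e / (k%:R + 1) by rewrite divr_gt0 // ltr_wpDl.
move: hs eq q0; set q := e / _; set z := q *+ k; move=> hs eq q0 h.
by have := le_trans h hs; rewrite -{1}eq gerDl leNgt q0.
Qed.
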